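(* Let $G=HN\le\mathrm{Sym}(\Omega)$ be a finite non-Frobenius $2$-transitive affine permutation group, where $N$ is the regular normal elementary abelian subgroup of order $p^k$ ($p$ prime) and $H$ is a point stabiliser. Let $H_p$ be a Sylow $p$-subgroup of $H$ and assume $H_p\ne1$. (i) $[N,H_p]$ is a proper subgroup of $N$, and $tz$ is a derangement for all $t\in H_p$ and all $z\in N\setminus[N,H_p]$. (ii) Suppose furthermore that $\kappa(G)=2$, and let $x\in N\setminus\{1\}$ (so $N\setminus\{1\}=x^G$). Then $H_p$ has exponent $p$, $H_p\setminus\{1\}\subseteq t^H$ for some $t\in H_p\setminus\{1\}$, $|\mathrm C_H(x)|=p^b$ for some $b\ge1$, and hence $|H|=(p^k-1)p^b$.
   Context: A derangement is an element fixing no point; $\kappa(G)$ is the number of conjugacy classes of derangements. A Frobenius group is a transitive non-regular group in which only the identity fixes more than one point. $[N,H_p]$ is the subgroup generated by commutators $[n,h]$, $n\in N$, $h\in H_p$. *)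

(* Defs.v *)
From HB Require Import structures.
From mathcomp Require Import all_boot all_fingroup all_solvable.
Set Implicit Arguments. Unset Strict Implicit. Unset Printing Implicit Defensive.
Local Open Scope group_scope.

Definition derangement (T : finType) (g : {perm T}) : bool :=
  [forall a, g a != a].

(* kappa(G): number of conjugacy classes of G consisting of derangements.
   (Conjugacy classes are conjugation invariant; a class consists of
   derangements iff one/all of its elements are derangements.) *)
Definition kappa (T : finType) (G : {group {perm T}}) : nat :=
  #|[set C in classes G | [forall g in C, derangement g]]|.

Definition two_transitive (T : finType) (G : {set {perm T}}) : Prop :=
  forall x y u v : T, x != y -> u != v ->
    exists2 g, g \in G & g x = u /\ g y = v.

Definition regular_on (T : finType) (G : {set {perm T}}) : Prop :=
  [transitive G, on [set: T] | 'P] /\ forall a : T, 'C_G[a | 'P] = 1.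

Definition frobenius_perm (T : finType) (G : {set {perm T}}) : Prop :=
  [/\ [transitive G, on [set: T] | 'P],
      ~ regular_on G &
      forall g, g \in G -> forall a b : T, a != b -> g a = a -> g b = b -> g = 1].

(* Main.v *)
Require Import Defs.
From HB Require Import structures.
From mathcomp Require Import all_boot all_fingroup all_solvable.
Local Open Scope group_scope.
Set Implicit Arguments. Unset Strict Implicit.

Lemma derL (T : finType) (G N H A : {group {perm T}}) (a : T) :
  N \subset G -> G \subset 'N(N) -> H \subset G ->
  (forall g, g \in G -> g a = a -> g \in H) ->
  (forall w, w \in H -> w \in N -> w = 1) ->
  (forall b, exists2 m, m \in N & m a = b) -> A \subset H ->
  forall t z, t \in A -> z \in N -> z \notin [~: N, A] -> derangement (t * z).
Proof.
move=> sNG nNG sHG memH TI trN sAH t z At Nz nz.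
apply/forallP => b; apply/eqP => fb.
have [m Nm mab] := trN b.
have Ht : t \in H := subsetP sAH t At.
have Gt : t \in G := subsetP sHG t Ht.
have Gm : m \in G := subsetP sNG m Nm.
have Gz : z \in G := subsetP sNG z Nz.
have Hu : m * (t * z) * m^-1 \in H.
  apply: memH; first by rewrite !groupM ?groupV.
  by move: fb; rewrite !permM mab => ->; rewrite -mab -permM mulgV perm1.
have Nw : m ^ t * z * m^-1 \in N.
  by rewrite groupM ?groupV // groupM // memJ_norm // (subsetP nNG).
have Hw : m ^ t * z * m^-1 \in H.
  have -> : m ^ t * z * m^-1 = t^-1 * (m * (t * z) * m^-1).
    by rewrite conjgE !mulgA.
  by rewrite groupM ?groupV.
have w1 := TI _ Hw Nw.
move/eqP: w1; rewrite -eq_mulgV1 => /eqP w1.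
have : z = [~ m, t]^-1.
  by rewrite commgEl invMg invgK; apply: (mulgI (m ^ t)); rewrite mulKVg w1.
move=> zE; move: nz; rewrite zE groupV mem_commg //.
Qed.
Lemma projP (T : finType) (G N H : {group {perm T}}) (a : T) :
  N \subset G -> G \subset 'N(N) -> H \subset G ->
  (forall g, g \in G -> g a = a -> g \in H) ->
  (forall w, w \in H -> w \in N -> w = 1) ->
  (forall b, exists2 m, m \in N & m a = b) ->
  forall g t t' z z', g \in G -> t \in H -> t' \in H -> z \in N -> z' \in N ->
  (t * z) ^ g = t' * z' -> t' \in t ^: H.
Proof.
move=> sNG nNG sHG memH TI trN g t t' z z' Gg Ht Ht' Nz Nz' E.
have [n Nn na] := trN (g a).
have Gn : n \in G := subsetP sNG n Nn.
have Hh : g * n^-1 \in H.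
  by apply: memH; rewrite ?groupM ?groupV // permM -na -permM mulgV perm1.
have gE : g = (g * n^-1) * n by rewrite mulgKV.
set h := g * n^-1 in Hh gE.
have Gh : h \in G := subsetP sHG h Hh.
have Gt : t \in G := subsetP sHG t Ht.
set c := [~ t ^ h, n].
have Nc : c \in N.
  have : c \in [~: G, N] by rewrite mem_commg // groupJ.
  by apply: subsetP; rewrite commg_subr.
set w := c * (z ^ h) ^ n.
have Nw : w \in N by rewrite groupM // !memJ_norm // (subsetP nNG).
have E2 : (t * z) ^ g = t ^ h * w.
  by rewrite gE conjgM (conjMg t z h) (conjMg (t ^ h) (z ^ h) n) (conjg_mulR (t ^ h) n) -mulgA.
have : t'^-1 * t ^ h = z' * w^-1.
  by apply: (mulgI t'); rewrite mulKVg mulgA -E E2 mulgK.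
move=> E3.
have x1 : t'^-1 * t ^ h = 1.
  by apply: TI; [rewrite groupM ?groupV ?groupJ | rewrite E3 groupM ?groupV].
have -> : t' = t ^ h.
  by apply: (mulgI t'^-1); rewrite x1 mulVg.
exact: memJ_class.
Qed.

Lemma derJ (T : finType) (y g : {perm T}) : derangement y -> derangement (y ^ g).
Proof.
move=> /forallP dy; apply/forallP => b; apply/eqP => fb.
have := dy (g^-1 b); rewrite -{2}fb conjgE !permM permK eqxx //.
Qed.

Definition dcl {T : finType} (G : {group {perm T}}) :=
  [set C in classes G | [forall g in C, derangement g]].

Lemma derS (T : finType) (G : {group {perm T}}) y :
  y \in G -> derangement y -> y ^: G \in dcl G.
Proof.
move=> Gy dy; rewrite inE mem_classes //=; apply/forall_inP => g /imsetP [h _ ->].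
exact: derJ.
Qed.

Lemma count3 (X : finType) (S : {set X}) A B C :
  #|S| = 2 -> A \in S -> B \in S -> C \in S -> A != B -> A != C -> B = C.
Proof.
move=> cS SA SB SC nAB nAC.
have sub : [set A; B] \subset S by apply/subsetP => u /set2P [] ->.
have : [set A; B] == S by rewrite eqEcard sub cards2 nAB cS.
move/eqP => E; move: SC; rewrite -E => /set2P [] E2.
  by move: nAC; rewrite E2 eqxx.
by rewrite E2.
Qed.

Theorem lemma4p5 (T : finType) (G N H Hp : {group {perm T}}) (p k : nat) (a : T) :
  prime p ->
  two_transitive G ->
  ~ frobenius_perm G ->
  N <| G -> regular_on N -> p.-abelem N -> #|N| = (p ^ k)%N ->
  H = 'C_G[a | 'P] ->
  Hp \in 'Syl_p(H) -> Hp :!=: 1 ->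
  (* (i) *)
  ([~: N, Hp] \proper N /\
   forall t z, t \in Hp -> z \in N :\: [~: N, Hp] -> derangement (t * z)) /\
  (* (ii) *)
  (kappa G = 2 ->
   forall x, x \in N -> x != 1 ->
   [/\ exponent Hp = p,
       exists2 t, t \in Hp^# & Hp^# \subset t ^: H &
       exists2 b, (1 <= b)%N & #|'C_H[x]| = (p ^ b)%N /\
                              #|H| = ((p ^ k - 1) * p ^ b)%N]).
Proof.
move=> pr_p tt _ nsNG regN abN cardN Hdef sylHp ntHp.
have sNG := normal_sub nsNG; have nNG := normal_norm nsNG.
have sHG : H \subset G by rewrite Hdef subsetIl.
have memH g : g \in G -> g a = a -> g \in H.
  by move=> Gg ga; rewrite Hdef inE Gg /=; apply/astab1P.
have memH' g : g \in H -> g a = a.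
  by rewrite Hdef inE => /andP [_ /astab1P].
have TI w : w \in H -> w \in N -> w = 1.
  move=> Hw Nw; have : w \in 'C_N[a | 'P].
    by rewrite inE Nw /=; apply/astab1P; exact: memH'.
  by rewrite regN.2 => /set1gP.
have trN b : exists2 m, m \in N & m a = b.
  have : b \in orbit 'P N a by rewrite (atransP regN.1 _ (in_setT a)) in_setT.
  by case/orbitP => m Nm E; exists m.
have sylP : p.-Sylow(H) Hp by move: sylHp; rewrite inE.
have sHpH := pHall_sub sylP; have pHp := pHall_pgroup sylP.
have nNHp : Hp \subset 'N(N) := subset_trans (subset_trans sHpH sHG) nNG.
have [t0 Ht0 t0n1] := trivgPn _ ntHp.
have ntN : N :!=: 1.
  have [c tc] : exists c, t0 c != c.
    apply/existsP; apply: contraR t0n1 => /existsPn Hc.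
    by apply/eqP/permP => c; rewrite perm1; apply/eqP; have := Hc c; rewrite negbK.
  pose d := if c == a then t0 c else c.
  have da : d != a.
    rewrite /d; case: (eqVneq c a) => [ca|cna //]; by move: tc; rewrite ca.
  have [n Nn na] := trN d; apply/trivgPn; exists n => //.
  by apply: contra da => /eqP n1; rewrite -na n1 perm1.
pose P := (N <*> Hp)%G.
have PE : P :=: N * Hp by rewrite /= norm_joinEr.
have pP : p.-group P by rewrite PE pgroupM abelem_pgroup.
have nilP := pgroup_nil pP.
have sNP : N \subset P := joing_subl N Hp.
have sHpP : Hp \subset P := joing_subr N Hp.
have nsNP : N <| P by rewrite /normal sNP join_subG normG nNHp.
have propN : [~: N, Hp] \proper N.
  by apply: nil_comm_properl nilP sNP ntN _; rewrite subsetI sHpP nNHp.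
have dL A := @derL T G N H A a sNG nNG sHG memH TI trN.
have pj := @projP T G N H a sNG nNG sHG memH TI trN.
split.
  split => // t z Ht /setDP [Nz nz]; exact: dL sHpH t z Ht Nz nz.
move=> k2 x Nx nx1.
have Gx : x \in G := subsetP sNG x Nx.
have k2' : #|dcl G| = 2 by [].
have [_ [z0 Nz0 nz0]] := properP propN.
have dx : derangement x.
  have := dL 1%G (sub1G _) 1 x (group1 _) Nx; rewrite mul1g commG1; apply.
  by rewrite inE.
have Sx : x ^: G \in dcl G := derS Gx dx.
have clsNot t z : t \in H -> t != 1 -> z \in N -> x ^: G != (t * z) ^: G.
  move=> Ht tn1 Nz; apply/eqP => E.
  have : t * z \in x ^: G by rewrite E class_refl.
  case/imsetP => g Gg E2.
  have Ntz : t * z \in N by rewrite E2 memJ_norm // (subsetP nNG).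
  have Nt : t \in N by rewrite -(mulgK z t) groupM ?groupV.
  by move: tn1; rewrite (TI t Ht Nt) eqxx.
have classEq t z t' z' : t \in H -> t' \in H -> z \in N -> z' \in N ->
    (t * z) ^: G = (t' * z') ^: G -> t' \in t ^: H.
  move=> Ht Ht' Nz Nz' E.
  have : t' * z' \in (t * z) ^: G by rewrite E class_refl.
  case/imsetP => g Gg E2; apply: (pj g t t' z z') => //.
have Ht0H : t0 \in H := subsetP sHpH t0 Ht0.
have St t : t \in Hp -> (t * z0) ^: G \in dcl G.
  move=> Ht; apply: derS; last exact: dL sHpH t z0 Ht Nz0 nz0.
  by apply: groupM; [apply: (subsetP sHG); apply: (subsetP sHpH) | apply: (subsetP sNG)].
have conjHp t : t \in Hp -> t != 1 -> t \in t0 ^: H.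
  move=> Ht tn1; have Htt := subsetP sHpH t Ht.
  apply: (classEq t0 z0 t z0) => //.
  apply: (count3 k2' Sx (St t0 Ht0) (St t Ht)); exact: clsNot.
have sub_cls : Hp^# \subset t0 ^: H.
  by apply/subsetP => t /setD1P [tn1 Ht]; exact: conjHp.
have ordHp t : t \in Hp -> t != 1 -> #[t] = #[t0].
  move=> Ht tn1; have /imsetP [h _ ->] := conjHp t Ht tn1; exact: orderJ.
have ot0 : #[t0] = p.
  have [_ pd _] := pgroup_pdiv pHp ntHp.
  have [u Hu ou] := Cauchy pr_p pd.
  have un1 : u != 1 by apply/eqP => u1; move: ou; rewrite u1 order1 => p1; rewrite -p1 in pr_p.
  by rewrite -(ordHp u Hu un1).
have expHp : exponent Hp = p.
  apply/eqP; rewrite eqn_dvd; apply/andP; split.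
    apply/exponentP => t Ht; case: (eqVneq t 1) => [->|tn1]; first exact: expg1n.
    by rewrite -ot0 -(ordHp t Ht tn1) expg_order.
  by rewrite -ot0 dvdn_exponent.
have Hconj y1 y2 : y1 \in N -> y1 != 1 -> y2 \in N -> y2 != 1 ->
    exists2 g, g \in H & y1 ^ g = y2.
  move=> Ny1 y1n Ny2 y2n.
  have ya y : y \in N -> y != 1 -> y a != a.
    move=> Ny yn; apply: contra yn => /eqP ya.
    by apply/eqP; apply: TI => //; apply: memH => //; exact: (subsetP sNG).
  have h1 : a != y1 a by rewrite eq_sym ya.
  have h2 : a != y2 a by rewrite eq_sym ya.
  have [g Gg [ga gy]] := tt a (y1 a) a (y2 a) h1 h2.
  have Hg : g \in H := memH g Gg ga.
  exists g => //.
  have Nw : y1 ^ g * y2^-1 \in N by rewrite groupM ?groupV // memJ_norm // (subsetP nNG).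
  have wa : (y1 ^ g * y2^-1) a = a.
    have gia : g^-1 a = a by rewrite -{1}ga permK.
    by rewrite permM conjgE !permM gia gy -permM mulgV perm1.
  have Hw : y1 ^ g * y2^-1 \in H.
    by apply: memH => //; exact: (subsetP sNG).
  by apply/eqP; rewrite eq_mulgV1; apply/eqP; exact: TI.
have pC : p.-group 'C_H[x].
  apply/pgroupP => q pr_q qd; rewrite inE; apply/negPn/negP => qp.
  have [h Ch oh] := Cauchy pr_q qd.
  move: Ch; rewrite inE => /andP [Hh cxh].
  have Gh : h \in G := subsetP sHG h Hh.
  have sAH : <[h]> \subset H by rewrite cycle_subG.
  have nNA : <[h]> \subset 'N(N) by rewrite cycle_subG (subsetP nNG).
  have coNA : coprime #|N| #|<[h]>|.
    rewrite cardN -orderE oh coprimeXl // prime_coprime // dvdn_prime2 //.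
    by rewrite eq_sym.
  have TIA := coprime_abel_cent_TI nNA coNA (abelem_abelian abN).
  have nx : x \notin [~: N, <[h]>].
    apply: contra nx1 => xc; apply/eqP; apply/set1gP; rewrite -TIA inE xc /=.
    by rewrite cent_cycle; apply/cent1P; apply/esym/cent1P.
  have dhx := dL _ sAH h x (cycle_id h) Nx nx.
  have hn1 : h != 1 by apply/eqP => h1; move: oh; rewrite h1 order1 => p1; rewrite -p1 in pr_q.
  have Shx : (h * x) ^: G \in dcl G by apply: derS => //; rewrite groupM.
  have E := count3 k2' Sx (St t0 Ht0) Shx (clsNot _ _ Ht0H t0n1 Nz0) (clsNot _ _ Hh hn1 Nx).
  have /imsetP [g _ hg] := classEq t0 z0 h x Ht0H Hh Nz0 Nx E.
  by move: oh; rewrite hg orderJ ot0 => qp'; move: qp; rewrite qp' eqxx.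
have [b Cb] := p_natP pC.
have [y /setIP [Ny Zy] yn1] := trivgPn _ (meet_center_nil nilP nsNP ntN).
have [g Hg yg] := Hconj y x Ny yn1 Nx nx1.
have sHpC : Hp :^ g \subset 'C_H[x].
  apply/subsetP => u /imsetP [v Hv ->]; rewrite inE (groupJ (subsetP sHpH v Hv) Hg) /=.
  rewrite -yg cent1J memJ_conjg; apply/cent1P.
  by case/centerP: Zy => _ /(_ v (subsetP sHpP v Hv)).
have b1 : (1 <= b)%N.
  have lc := subset_leq_card sHpC.
  case: b Cb => // Cb.
  by move: lc; rewrite cardJg Cb expn0 leqNgt cardG_gt1 ntHp.
split => //.
  by exists t0 => //; rewrite !inE t0n1 Ht0.
exists b => //; split => //.
have clsx : x ^: H = N^#.
  apply/eqP; rewrite eqEsubset; apply/andP; split; apply/subsetP => u.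
    case/imsetP => h Hh ->; rewrite !inE conjg_eq1 nx1 memJ_norm //.
    exact: (subsetP nNG) (subsetP sHG h Hh).
  case/setD1P => un1 Nu; have [h Hh <-] := Hconj x u Nx nx1 Nu un1.
  exact: memJ_class.
have cardD : #|N^#| = (p ^ k - 1)%N by rewrite -cardN (cardsD1 1 N) group1 add1n subn1.
by rewrite -(Lagrange (subsetIl H 'C[x])) index_cent1 clsx cardD Cb mulnC.
Qed.
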